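(* Let $n\geq1$ and $1\leq i<j\leq n$. In $M_n$, the right-lcm of $\rho_i$ and $\rho_j$ exists and equals $\rho_i\rho_n^{\,i}\rho_{j-i}=\rho_j\rho_n^{\,i}$.
   Context: $M_n$ denotes the monoid with generators $\rho_1,\dots,\rho_n$ and relations $\rho_1\rho_n\rho_i=\rho_{i+1}\rho_n$ for $1\leq i\leq n-1$. A right-lcm of $a,b$ is a common right-multiple of $a$ and $b$ (an element $ax=by$) that left-divides every common right-multiple of $a$ and $b$. *)

(* Defs.v *)
From mathcomp Require Import all_boot.
From Stdlib Require Import Relations.
Set Implicit Arguments. Unset Strict Implicit. Unset Printing Implicit Defensive.

(* Elements are represented by words over the letters 1..n (letter a = rho_a);
   equality in M_n is the congruence generated by the relations. *)

Definition letter (n a : nat) : bool := (0 < a <= n).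
Definition word (n : nat) (w : seq nat) : bool := all (letter n) w.

Inductive rel_step (n : nat) : seq nat -> seq nat -> Prop :=
| rel_step_intro : forall (u v : seq nat) (i : nat),
    1 <= i <= n.-1 ->
    rel_step n (u ++ [:: 1; n; i] ++ v) (u ++ [:: i.+1; n] ++ v).

Definition Meq (n : nat) : relation (seq nat) := clos_refl_sym_trans _ (rel_step n).

Definition ldiv (n : nat) (a b : seq nat) : Prop :=
  exists c, word n c /\ Meq n (a ++ c) b.

Definition is_right_lcm (n : nat) (a b m : seq nat) : Prop :=
  [/\ word n m, ldiv n a m, ldiv n b m &
      forall c, word n c -> ldiv n a c -> ldiv n b c -> ldiv n m c].

(* Main.v *)
Require Import Defs.
From mathcomp Require Import all_boot.
From Stdlib Require Import Relations Lia.
From mathcomp Require Import zify.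
Set Implicit Arguments. Unset Strict Implicit. Unset Printing Implicit Defensive.

Section M.
Variable n : nat.

Lemma Meq_refl x : Meq n x x.
Proof. exact: rst_refl. Qed.
Lemma Meq_sym x y : Meq n x y -> Meq n y x.
Proof. exact: rst_sym. Qed.
Lemma Meq_trans x y z : Meq n x y -> Meq n y z -> Meq n x z.
Proof. exact: rst_trans. Qed.

Lemma top_step i v : 1 <= i <= n.-1 -> Meq n [:: 1, n, i & v] [:: i.+1, n & v].
Proof. move=> H; apply: rst_step; exact: (@rel_step_intro n [::] v i H). Qed.

Lemma Meq_cong p s x y : Meq n x y -> Meq n (p ++ x ++ s) (p ++ y ++ s).
Proof.
elim=> [a b [u v i H]| a | a b _ IH | a b c _ IH1 _ IH2].
- apply: rst_step.
  have := @rel_step_intro n (p ++ u) (v ++ s) i H.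
  by rewrite -!catA.
- exact: rst_refl.
- exact: rst_sym.
- exact: rst_trans IH2.
Qed.

Lemma Meq_catl p x y : Meq n x y -> Meq n (p ++ x) (p ++ y).
Proof. move=> H; have := Meq_cong p [::] H; by rewrite !cats0. Qed.
Lemma Meq_catr s x y : Meq n x y -> Meq n (x ++ s) (y ++ s).
Proof. move=> H; exact: (Meq_cong [::] s H). Qed.
Lemma Meq_cons h x y : Meq n x y -> Meq n (h :: x) (h :: y).
Proof. exact: (Meq_catl [:: h]). Qed.

Definition mu (w : seq nat) := sumn (map (maxn 1) w).

Lemma mu_cons a w : mu (a :: w) = maxn 1 a + mu w.
Proof. by []. Qed.

Lemma mu_cat a b : mu (a ++ b) = mu a + mu b.
Proof. by rewrite /mu map_cat sumn_cat. Qed.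

Lemma Meq_mu x y : Meq n x y -> mu x = mu y.
Proof.
elim=> [a b [u v i H]| a | a b _ IH | a b c _ IH1 _ IH2] //.
- rewrite !mu_cat /= /mu /=. 
  have h1 : maxn 1 i = i by apply/maxn_idPr; case/andP: H.
  have h2 : maxn 1 i.+1 = i.+1 by apply/maxn_idPr.
  have h3 : maxn 1 n = n.
    by apply/maxn_idPr; case/andP: H => a1 a2; lia.
  rewrite h1 h2 h3 (maxn_idPl (leqnn 1)); lia.
- by rewrite IH1.
Qed.

Lemma Meq_word x y : Meq n x y -> word n x = word n y.
Proof.
elim=> [a b [u v i H]| a | a b _ IH | a b c _ IH1 _ IH2] //.
- rewrite /word !all_cat /= /letter.
  case/andP: H => a1 a2.
  have -> : (0 < i <= n) = true by apply/andP; split; lia.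
  have -> : (0 < i.+1 <= n) = true by apply/andP; split; lia.
  have -> : (0 < n <= n) = true by apply/andP; split; lia.
  have -> : (0 < 1 <= n) = true by apply/andP; split; lia.
  by [].
- by rewrite IH1.
Qed.

Lemma nseq_add k l (a : nat) : nseq (k + l) a = nseq k a ++ nseq l a.
Proof. by elim: k => //= k ->. Qed.

Lemma iden i j : 1 <= i -> i < j -> j <= n ->
  Meq n (i :: nseq i n ++ [:: j - i]) (j :: nseq i n).
Proof.
elim: i j => [|i IH] j // _ Hij Hj.
case: i IH Hij => [|i] IH Hij.
- have := top_step (i:=j.-1) [::].
  have -> : j.-1.+1 = j by lia.
  rewrite /= subn1; apply; apply/andP; split; lia.
- apply: Meq_trans.
    apply: Meq_sym; apply: (top_step (i:=i.+1)); apply/andP; split; lia.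
  have E : j - i.+2 = j.-1 - i.+1 by lia.
  rewrite E.
  apply: Meq_trans (Meq_catl [:: 1; n] (IH j.-1 _ _ _)) _; try lia.
  have := top_step (i:=j.-1) (nseq i.+1 n).
  have -> : j.-1.+1 = j by lia.
  by apply; apply/andP; split; lia.
Qed.

Lemma iden_ctx i j p e : 1 <= i -> i < j -> j <= n ->
  Meq n (p ++ i :: nseq i n ++ (j - i) :: e) (p ++ j :: nseq i n ++ e).
Proof.
move=> h1 h2 h3; have := Meq_cong p e (iden h1 h2 h3).
by rewrite /= -!catA /=.
Qed.

Definition Lt h u h' u' :=
  [/\ 1 <= h, h < h', h' <= n &
   exists d, Meq n u (nseq h n ++ (h' - h) :: d) /\ Meq n u' (nseq h n ++ d)].

Definition Rh h u h' u' :=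
  (h = h' /\ Meq n u u') \/ Lt h u h' u' \/ Lt h' u' h u.

Definition Rw x y :=
  match x, y with
  | [::], [::] => True
  | h :: u, h' :: u' => Rh h u h' u'
  | _, _ => False
  end.

Definition P N := forall x y, mu x < N -> Meq n x y -> Rw x y.

Lemma Lt_irr h u v : Lt h u h v -> False.
Proof. by case=> _ /[!ltnn]. Qed.

Section Step.
Variable N : nat.
Hypothesis HP : P N.

Lemma cancel1 h u v : mu (h :: u) < N -> Meq n (h :: u) (h :: v) -> Meq n u v.
Proof.
move=> hm hq; have := HP hm hq => /=.
by case=> [[_ //]|[/Lt_irr|/Lt_irr]].
Qed.

Lemma canceln k u v : mu (nseq k n ++ u) < N ->
  Meq n (nseq k n ++ u) (nseq k n ++ v) -> Meq n u v.
Proof.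
elim: k => [//|k IH] /= hm hq; apply: IH.
  by move: hm; rewrite mu_cons; lia.
exact: cancel1 hq.
Qed.

Lemma Rlt h u h' u' : mu (h :: u) < N -> Meq n (h :: u) (h' :: u') -> h < h' ->
  Lt h u h' u'.
Proof.
move=> hm hq hl; have := HP hm hq => /=.
case=> [[E _]|[//|[_ H _ _]]]; first by move: hl; rewrite E ltnn.
by move: (ltn_trans hl H); rewrite ltnn.
Qed.

Lemma Req h u v : mu (h :: u) < N -> Meq n (h :: u) (h :: v) -> Meq n u v.
Proof. exact: cancel1. Qed.

Lemma asc h1 u1 h2 u2 h3 u3 : mu u2 < N ->
  Lt h1 u1 h2 u2 -> Lt h2 u2 h3 u3 -> Lt h1 u1 h3 u3.
Proof.
move=> hm [a1 a2 a3 [d [D1 D2]]] [b1 b2 b3 [e [E1 E2]]].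
have Hd : Meq n d (nseq (h2 - h1) n ++ (h3 - h2) :: e).
  apply: (@canceln h1); first by rewrite -(Meq_mu D2).
  rewrite catA -nseq_add subnKC; last lia.
  exact: Meq_trans (Meq_sym D2) E1.
split; try lia.
exists (nseq (h2 - h1) n ++ e); split.
- apply: Meq_trans D1 _.
  apply: Meq_trans (Meq_catl _ (Meq_cons _ Hd)) _.
  have := @iden_ctx (h2 - h1) (h3 - h1) (nseq h1 n) e.
  have -> : h3 - h1 - (h2 - h1) = h3 - h2 by lia.
  move=> H; apply: Meq_trans (H _ _ _); try lia.
  exact: Meq_refl.
- by rewrite catA -nseq_add subnKC //; lia.
Qed.

Lemma top a x b y c z : mu z < N -> Lt a x c z -> Lt b y c z ->
  (a < b -> Lt a x b y) /\ (a = b -> Meq n x y).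
Proof.
move=> hm [a1 a2 a3 [d [D1 D2]]] [b1 b2 b3 [e [E1 E2]]]; split.
- move=> ab.
  have Hd : Meq n d (nseq (b - a) n ++ e).
    apply: (@canceln a); first by rewrite -(Meq_mu D2).
    rewrite catA -nseq_add subnKC; last lia.
    exact: Meq_trans (Meq_sym D2) E2.
  split; try lia.
  exists (nseq (b - a) n ++ (c - b) :: e); split.
  + apply: Meq_trans D1 _.
    apply: Meq_trans (Meq_catl _ (Meq_cons _ Hd)) _.
    apply: Meq_sym.
    have := @iden_ctx (b - a) (c - a) (nseq a n) e.
    have -> : c - a - (b - a) = c - b by lia.
    move=> H; apply: Meq_trans (H _ _ _); try lia.
    exact: Meq_refl.
  + by rewrite catA -nseq_add subnKC //; lia.
- move=> ab; subst b.
  have Hd : Meq n d e.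
    apply: (@canceln a); first by rewrite -(Meq_mu D2).
    exact: Meq_trans (Meq_sym D2) E2.
  exact: Meq_trans D1 (Meq_sym (Meq_trans E1 (Meq_sym (Meq_catl _ (Meq_cons _ Hd))))).
Qed.

Lemma bot a x b y c z : mu z < N -> Lt c z a x -> Lt c z b y ->
  (a < b -> Lt a x b y) /\ (a = b -> Meq n x y).
Proof.
move=> hm [a1 a2 a3 [d [D1 D2]]] [b1 b2 b3 [e [E1 E2]]].
have He : Meq n ((a - c) :: d) ((b - c) :: e).
  apply: (@canceln c); first by rewrite -(Meq_mu D1).
  exact: Meq_trans (Meq_sym D1) E1.
have hm' : mu ((a - c) :: d) < N.
  move: hm; rewrite (Meq_mu D1) mu_cat; lia.
split.
- move=> ab.
  have hl : a - c < b - c by lia.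
  have [_ _ _ [f [F1 F2]]] := Rlt hm' He hl.
  split; try lia.
  exists f; split.
  + apply: Meq_trans D2 _.
    apply: Meq_trans (Meq_catl _ F1) _.
    rewrite catA -nseq_add subnKC; last lia.
    have -> : b - c - (a - c) = b - a by lia.
    exact: Meq_refl.
  + apply: Meq_trans E2 _.
    apply: Meq_trans (Meq_catl _ F2) _.
    rewrite catA -nseq_add subnKC; last lia.
    exact: Meq_refl.
- move=> ab; subst b.
  have Hde := cancel1 hm' He.
  exact: Meq_trans D2 (Meq_sym (Meq_trans E2 (Meq_sym (Meq_catl _ Hde)))).
Qed.

Lemma Lt_Meql h u h' u' v : Meq n u v -> Lt h u h' u' -> Lt h v h' u'.
Proof.
move=> H [a1 a2 a3 [d [D1 D2]]]; split=> //; exists d; split=> //.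
exact: Meq_trans (Meq_sym H) D1.
Qed.
Lemma Lt_Meqr h u h' u' v : Meq n u' v -> Lt h u h' u' -> Lt h u h' v.
Proof.
move=> H [a1 a2 a3 [d [D1 D2]]]; split=> //; exists d; split=> //.
exact: Meq_trans (Meq_sym H) D2.
Qed.

Lemma Rh_trans h1 u1 h2 u2 h3 u3 : mu u2 < N ->
  Rh h1 u1 h2 u2 -> Rh h2 u2 h3 u3 -> Rh h1 u1 h3 u3.
Proof.
move=> hm [[E1 M1]|[L1|L1]] [[E2 M2]|[L2|L2]]; subst.
- by left; split=> //; exact: Meq_trans M2.
- by right; left; exact: Lt_Meql (Meq_sym M1) L2.
- by right; right; exact: Lt_Meqr (Meq_sym M1) L2.
- by right; left; exact: Lt_Meqr M2 L1.
- by right; left; exact: asc L1 L2.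
- case: (ltngtP h1 h3) => c.
  + by right; left; case: (top hm L1 L2) => /(_ c).
  + by right; right; case: (top hm L2 L1) => /(_ c).
  + by left; split=> //; case: (top hm L1 L2) => _ /(_ c).
- by right; right; exact: Lt_Meql M2 L1.
- case: (ltngtP h1 h3) => c.
  + by right; left; case: (bot hm L1 L2) => /(_ c).
  + by right; right; case: (bot hm L2 L1) => /(_ c).
  + by left; split=> //; case: (bot hm L1 L2) => _ /(_ c).
- by right; right; exact: asc L2 L1.
Qed.

Lemma Rw_sym x y : Rw x y -> Rw y x.
Proof.
case: x => [|h u]; case: y => [|h' u'] //=.
case=> [[E M]|[L|L]]; [left; split; [by []| exact: Meq_sym]|by right; right|by right;left].
Qed.

Lemma Pstep : P N.+1.
Proof.
move=> x y hm hq; elim: hq hm.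
- move=> a b [u v i H] _.
  case: u => [|h u] /=.
  + right; left; split; try (case/andP: H; lia).
    exists v; split; last exact: Meq_refl.
    rewrite /= subn1 /=; exact: Meq_refl.
  + left; split=> //; apply: rst_step; exact: rel_step_intro.
- case=> [|h u] _ //=; left; split=> //; exact: Meq_refl.
- move=> a b hab IH hm; apply: Rw_sym; apply: IH; by rewrite (Meq_mu hab).
- move=> a b c hab IH1 hbc IH2 hm.
  have r1 := IH1 hm.
  have hm2 : mu b < N.+1 by rewrite -(Meq_mu hab).
  have r2 := IH2 hm2.
  move: r1 r2 hm2; case: a {hm hab IH1 IH2} => [|h1 u1]; case: b {hbc} => [|h2 u2] //;
    case: c => [|h3 u3] //= r1 r2 hm2.
  apply: Rh_trans r1 r2; move: hm2; rewrite mu_cons; lia.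
Qed.

End Step.

Lemma Pall N : P N.
Proof. elim: N => [x y //|N IH]; exact: Pstep. Qed.

Lemma main x y : Meq n x y -> Rw x y.
Proof. move=> H; exact: (@Pall (mu x).+1 x y (ltnSn _) H). Qed.

End M.

Theorem corollary4p10 (n i j : nat) :
  1 <= n -> 1 <= i -> i < j -> j <= n ->
  is_right_lcm n [:: i] [:: j] ([:: i] ++ nseq i n ++ [:: j - i]) /\
  Meq n ([:: i] ++ nseq i n ++ [:: j - i]) ([:: j] ++ nseq i n).
Proof.
move=> h0 h1 h2 h3.
have Id := iden h1 h2 h3.
have wn : word n (nseq i n) by rewrite /word all_nseq /letter h0 leqnn orbT.
have wji : letter n (j - i) by rewrite /letter; apply/andP; split; lia.
split=> //; split.
- rewrite /word /= all_cat; apply/andP; split.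
    by rewrite /letter h1 /=; lia.
  by apply/andP; split=> //=; rewrite wji.
- exists (nseq i n ++ [:: j - i]); split; last exact: Meq_refl.
  rewrite /word all_cat; apply/andP; split=> //=; by rewrite wji.
- exists (nseq i n); split=> //; exact: Meq_sym.
- move=> c wc [a [wa Ma]] [b [wb Mb]].
  have := main (Meq_trans Ma (Meq_sym Mb)) => /=.
  case=> [[E _]|[[_ _ _ [d [D1 D2]]]|[_ L _ _]]]; last 1 first.
  + by move: (ltn_trans L h2); rewrite ltnn.
  + by move: h2; rewrite E ltnn.
  have wd : word n d.
    have := Meq_word D1; rewrite wa /word all_cat /=.
    by move/esym/andP => [_ /andP[]].
  exists d; split=> //.
  apply: Meq_trans Ma.
  rewrite /= -catA /=; apply: Meq_cons; exact: Meq_sym.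
Qed.
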